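(* For $\lambda\in\mathbb C$ let $T_\lambda=\begin{bmatrix}0&1&0\\0&0&0\\0&0&\lambda\end{bmatrix}\in M_3(\mathbb C)$. Then $C^*_e(\mathcal S_{T_\lambda})\cong M_2(\mathbb C)$ if $|\lambda|\le 1/2$, and $C^*_e(\mathcal S_{T_\lambda})\cong M_2(\mathbb C)\oplus\mathbb C$ if $|\lambda|>1/2$.
   Context: $\mathcal S_T=\mathrm{span}\{1,T,T^*\}$. For an operator system $\mathcal S\subseteq B(H)$, a boundary representation is an irreducible unital $*$-representation $\rho$ of $C^*(\mathcal S)$ such that $\rho$ is the only unital completely positive extension of $\rho|_{\mathcal S}$ to $C^*(\mathcal S)$; the Šilov ideal $\mathfrak S_{\mathcal S}$ is the intersection of the kernels of all boundary representations, and the C$^*$-envelope is $C^*_e(\mathcal S)=C^*(\mathcal S)/\mathfrak S_{\mathcal S}$ (equivalently, the C$^*$-algebra $C^*_e(\mathcal S)$ with a unital complete isometry $\iota:\mathcal S\to C^*_e(\mathcal S)$ generating it, such that for every unital complete isometry $\phi$ of $\mathcal S$ into a C$^*$-algebra there is a $*$-epimorphism $\pi:C^*(\phi(\mathcal S))\to C^*_e(\mathcal S)$ with $\pi\circ\phi=\iota$; unique up to $*$-isomorphism). *)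

(* Defs.v *)
From HB Require Import structures.
From mathcomp Require Import all_boot all_order all_algebra.
Set Implicit Arguments. Unset Strict Implicit. Unset Printing Implicit Defensive.
Import Order.TTheory GRing.Theory Num.Theory.
Local Open Scope ring_scope.

Definition adj {C : numClosedFieldType} {m n : nat} (A : 'M[C]_(m, n)) : 'M[C]_(n, m) :=
  (map_mx (@Num.conj C) A)^T.

Definition opsys {C : numClosedFieldType} {m : nat} (T : 'M[C]_m) (a : 'M[C]_m) : Prop :=
  exists c0 c1 c2 : C, a = c0 *: 1%:M + c1 *: T + c2 *: adj T.

(* C^*(S): the unital *-subalgebra of M_m generated by S (in finite dimension
   it is automatically norm closed). *)
Inductive cstar_gen {C : numClosedFieldType} {m : nat} (S : 'M[C]_m -> Prop) : 'M[C]_m -> Prop :=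
| cg_S a : S a -> cstar_gen S a
| cg_1 : cstar_gen S 1%:M
| cg_add a b : cstar_gen S a -> cstar_gen S b -> cstar_gen S (a + b)
| cg_scale (c : C) a : cstar_gen S a -> cstar_gen S (c *: a)
| cg_mul a b : cstar_gen S a -> cstar_gen S b -> cstar_gen S (a *m b)
| cg_adj a : cstar_gen S a -> cstar_gen S (adj a).

Definition blockpos {C : numClosedFieldType} {n m : nat} (A : 'I_n -> 'I_n -> 'M[C]_m) : Prop :=
  forall x : 'I_n -> 'cV[C]_m,
    0 <= \sum_(i < n) \sum_(j < n) (adj (x i) *m A i j *m x j) 0 0.

Definition linear_on {C : numClosedFieldType} {m k : nat}
  (D : 'M[C]_m -> Prop) (f : 'M[C]_m -> 'M[C]_k) : Prop :=
  (forall a b, D a -> D b -> f (a + b) = f a + f b) /\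
  (forall (c : C) a, D a -> f (c *: a) = c *: f a).

Definition is_starhom {C : numClosedFieldType} {m k : nat}
  (D : 'M[C]_m -> Prop) (f : 'M[C]_m -> 'M[C]_k) : Prop :=
  [/\ f 1%:M = 1%:M, linear_on D f,
      forall a b, D a -> D b -> f (a *m b) = f a *m f b &
      forall a, D a -> f (adj a) = adj (f a)].

(* Subspaces are row spaces of V; the column vector x^T lies in the
   subspace iff x does, and rho(a) x^T = (x *m rho(a)^T)^T. *)
Definition irreducible_rep {C : numClosedFieldType} {m k : nat}
  (D : 'M[C]_m -> Prop) (f : 'M[C]_m -> 'M[C]_k) : Prop :=
  (0 < k)%N /\
  forall V : 'M[C]_k,
    (forall a, D a -> (V *m (f a)^T <= V)%MS) -> (V <= (0 : 'M[C]_k))%MS \/ ((1%:M : 'M[C]_k) <= V)%MS.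

Definition is_ucp {C : numClosedFieldType} {m k : nat}
  (D : 'M[C]_m -> Prop) (f : 'M[C]_m -> 'M[C]_k) : Prop :=
  [/\ f 1%:M = 1%:M, linear_on D f &
      forall (n : nat) (A : 'I_n -> 'I_n -> 'M[C]_m),
        (forall i j, D (A i j)) -> blockpos A -> blockpos (fun i j => f (A i j))].

Definition boundary_rep {C : numClosedFieldType} {m k : nat}
  (S : 'M[C]_m -> Prop) (rho : 'M[C]_m -> 'M[C]_k) : Prop :=
  [/\ is_starhom (cstar_gen S) rho, irreducible_rep (cstar_gen S) rho &
      forall phi : 'M[C]_m -> 'M[C]_k,
        is_ucp (cstar_gen S) phi -> (forall a, S a -> phi a = rho a) ->
        forall a, cstar_gen S a -> phi a = rho a].

Definition silov {C : numClosedFieldType} {m : nat} (S : 'M[C]_m -> Prop) (a : 'M[C]_m) : Prop :=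
  cstar_gen S a /\
  forall (k : nat) (rho : 'M[C]_m -> 'M[C]_k), boundary_rep S rho -> rho a = 0.

(* C^*_e(S) = C^*(S)/Silov ideal is *-isomorphic to M_p(C): there is a
   surjective *-homomorphism C^*(S) -> M_p whose kernel is the Silov ideal. *)
Definition env_iso_M {C : numClosedFieldType} {m : nat} (S : 'M[C]_m -> Prop) (p : nat) : Prop :=
  exists pi : 'M[C]_m -> 'M[C]_p,
    [/\ is_starhom (cstar_gen S) pi,
        forall B : 'M[C]_p, exists2 a, cstar_gen S a & pi a = B &
        forall a, cstar_gen S a -> (pi a = 0 <-> silov S a)].

(* C^*_e(S) is *-isomorphic to M_p(C) (+) M_q(C) (with C = M_1(C)). *)
Definition env_iso_MM {C : numClosedFieldType} {m : nat} (S : 'M[C]_m -> Prop) (p q : nat) : Prop :=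
  exists (pi1 : 'M[C]_m -> 'M[C]_p) (pi2 : 'M[C]_m -> 'M[C]_q),
    [/\ is_starhom (cstar_gen S) pi1, is_starhom (cstar_gen S) pi2,
        forall (B1 : 'M[C]_p) (B2 : 'M[C]_q),
          exists2 a, cstar_gen S a & pi1 a = B1 /\ pi2 a = B2 &
        forall a, cstar_gen S a -> (pi1 a = 0 /\ pi2 a = 0 <-> silov S a)].

Definition Tlam {C : numClosedFieldType} (l : C) : 'M[C]_3 :=
  \matrix_(i < 3, j < 3)
    (if ((i : nat) == 0%N) && ((j : nat) == 1%N) then 1
     else if ((i : nat) == 2%N) && ((j : nat) == 2%N) then l else 0).

(* Main.v *)
Require Import Defs.
From HB Require Import structures.
From mathcomp Require Import all_boot all_order all_algebra.
From mathcomp Require Import ring.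
Import Order.TTheory GRing.Theory Num.Theory.
Local Open Scope ring_scope.

Lemma irr_gen (F : fieldType) k (V : 'M[F]_k) :
  (forall i j : 'I_k, (V *m delta_mx i j <= V)%MS) -> (V <= (0 : 'M[F]_k))%MS \/ ((1%:M : 'M[F]_k) <= V)%MS.
Proof.
move=> H; have [->|nz] := eqVneq V 0; first by left; rewrite submx0.
right.
case/boolP: [exists r, exists c, V r c != 0] => [/existsP[r /existsP[c Hrc]]|/existsPn Hn]; last first.
  case/eqP: nz; apply/matrixP => r c; rewrite mxE.
  by move/existsPn: (Hn r) => /(_ c); rewrite negbK => /eqP.
apply/row_subP => j; rewrite row1.
have -> : 'e_j = (V r c)^-1 *: row r (V *m delta_mx c j).
  apply/matrixP => a b; rewrite !mxE (bigD1 c) //= big1 ?addr0.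
    by rewrite !mxE eqxx /= ord1 eqxx /= mulrA mulVf // mul1r.
  by move=> p /negbTE pc; rewrite mxE pc mulr0.
by apply: scalemx_sub; apply: submx_trans (H c j); apply: row_sub.
Qed.

Section S.
Variable C : numClosedFieldType.
Variable l : C.
Definition i0 : 'I_3 := @Ordinal 3 0 isT.
Definition i1 : 'I_3 := @Ordinal 3 1 isT.
Definition i2 : 'I_3 := @Ordinal 3 2 isT.
Notation T := (Tlam l).
Notation E := (@delta_mx C 3 3).
Notation S := (opsys T).
Notation CS := (cstar_gen S).

Ltac ent := apply/matrixP => -[[|[|[|?]]] ?] -[[|[|[|?]]] ?] //;
  repeat (rewrite ?mxE ?big_ord_recr ?big_ord0 /=).

Definition bd (a : 'M[C]_3) := [/\ a i0 i2 = 0, a i1 i2 = 0, a i2 i0 = 0 & a i2 i1 = 0].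

Lemma sum3 (f : 'I_3 -> C) : \sum_k f k = f i0 + f i1 + f i2.
Proof. by rewrite !big_ord_recr big_ord0 /= add0r; congr (f _ + f _ + f _); apply: val_inj. Qed.

Lemma cg_bd a : CS a -> bd a.
Proof.
elim => {a}.
- move=> a [c0 [c1 [c2 ->]]]; by split; rewrite !mxE /= ?conjC0; ring.
- by split; rewrite !mxE.
- move=> a b _ [a1 a2 a3 a4] _ [b1 b2 b3 b4]; split; by rewrite mxE ?a1 ?a2 ?a3 ?a4 ?b1 ?b2 ?b3 ?b4 addr0.
- move=> c a _ [a1 a2 a3 a4]; split; by rewrite mxE ?a1 ?a2 ?a3 ?a4 mulr0.
- move=> a b _ [a1 a2 a3 a4] _ [b1 b2 b3 b4]; split; rewrite mxE sum3 ?a1 ?a2 ?a3 ?a4 ?b1 ?b2 ?b3 ?b4; ring.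
- move=> a _ [a1 a2 a3 a4]; split; by rewrite !mxE ?a1 ?a2 ?a3 ?a4 conjC0.
Qed.

Lemma ord3 (i : 'I_3) : [\/ i = i0, i = i1 | i = i2].
Proof.
case: i => [[|[|[|k]]] Hk]; first (by constructor 1; apply: val_inj);
  first (by constructor 2; apply: val_inj); first (by constructor 3; apply: val_inj).
by [].
Qed.

Ltac ent3 := apply/matrixP; do 2 (let x := fresh "x" in move=> x; case: (ord3 x) => ->);
  rewrite ?(mxE, sum3) /=.

Lemma T_dec : T = E i0 i1 + l *: E i2 i2.
Proof. ent3; ring. Qed.
Lemma Tadj_dec : adj T = E i1 i0 + l^* *: E i2 i2.
Proof. ent3; rewrite ?conjC0 ?conjC1; ring. Qed.
Lemma one_dec : 1%:M = E i0 i0 + E i1 i1 + E i2 i2 :> 'M[C]_3.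
Proof. ent3; ring. Qed.

Lemma TTa : T *m adj T = E i0 i0 + (l * l^*) *: E i2 i2.
Proof. ent3; rewrite ?conjC0 ?conjC1; ring. Qed.
Lemma TaT : adj T *m T = E i1 i1 + (l * l^*) *: E i2 i2.
Proof. ent3; rewrite ?conjC0 ?conjC1; ring. Qed.
Lemma TT : T *m T = (l * l) *: E i2 i2.
Proof. ent3; ring. Qed.

Lemma cgT : CS T. Proof. apply: cg_S; exists 0, 1, 0; by rewrite !scale0r scale1r add0r addr0. Qed.
Lemma cgTa : CS (adj T). Proof. apply: cg_S; exists 0, 0, 1; by rewrite !scale0r scale1r !add0r. Qed.
Lemma cg_lin a b (c : C) : CS a -> CS b -> CS (a + c *: b).
Proof. by move=> ha hb; apply: cg_add => //; apply: cg_scale. Qed.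

Lemma cgE22 : CS (E i2 i2).
Proof.
have [l0|l0] := eqVneq l 0.
  have -> : E i2 i2 = 1%:M + (-1) *: (T *m adj T) + (-1) *: (adj T *m T).
    by rewrite TTa TaT l0; ent3; rewrite ?conjC0; ring.
  apply: cg_lin; [apply: cg_lin; [exact: cg_1|]|]; apply: cg_mul; (exact: cgT || exact: cgTa).
have -> : E i2 i2 = (l * l)^-1 *: (T *m T).
  by rewrite TT scalerA mulVf ?scale1r // mulf_neq0.
by apply: cg_scale; apply: cg_mul; exact: cgT.
Qed.
Lemma cgE01 : CS (E i0 i1).
Proof. have -> : E i0 i1 = T + (- l) *: E i2 i2 by rewrite T_dec scaleNr addrK.
by apply: cg_lin; [exact: cgT|exact: cgE22]. Qed.
Lemma cgE10 : CS (E i1 i0).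
Proof. have -> : E i1 i0 = adj T + (- l^* ) *: E i2 i2 by rewrite Tadj_dec scaleNr addrK.
by apply: cg_lin; [exact: cgTa|exact: cgE22]. Qed.
Lemma cgE00 : CS (E i0 i0).
Proof. have -> : E i0 i0 = T *m adj T + (- (l * l^* )) *: E i2 i2 by rewrite TTa scaleNr addrK.
by apply: cg_lin; [apply: cg_mul; [exact: cgT|exact: cgTa]|exact: cgE22]. Qed.
Lemma cgE11 : CS (E i1 i1).
Proof. have -> : E i1 i1 = adj T *m T + (- (l * l^* )) *: E i2 i2 by rewrite TaT scaleNr addrK.
by apply: cg_lin; [apply: cg_mul; [exact: cgTa|exact: cgT]|exact: cgE22]. Qed.

Lemma bd_dec a : bd a -> a = a i0 i0 *: E i0 i0 + a i0 i1 *: E i0 i1 + a i1 i0 *: E i1 i0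
   + a i1 i1 *: E i1 i1 + a i2 i2 *: E i2 i2.
Proof. case=> a1 a2 a3 a4; ent3; rewrite ?a1 ?a2 ?a3 ?a4; ring. Qed.

Definition j0 : 'I_2 := @Ordinal 2 0 isT.
Definition j1 : 'I_2 := @Ordinal 2 1 isT.
Lemma ord2 (i : 'I_2) : i = j0 \/ i = j1.
Proof.
case: i => [[|[|k]] Hk]; first (by left; apply: val_inj); first (by right; apply: val_inj).
by [].
Qed.
Lemma sum2 (f : 'I_2 -> C) : \sum_k f k = f j0 + f j1.
Proof. by rewrite !big_ord_recr big_ord0 /= add0r; congr (f _ + f _); apply: val_inj. Qed.
Definition w (i : 'I_2) : 'I_3 := widen_ord (leqnSn 2) i.
Lemma w0 : w j0 = i0. Proof. exact: val_inj. Qed.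
Lemma w1 : w j1 = i1. Proof. exact: val_inj. Qed.
Definition pi1 (a : 'M[C]_3) : 'M[C]_2 := \matrix_(i, j) a (w i) (w j).
Definition pi2 (a : 'M[C]_3) : 'M[C]_1 := (a i2 i2)%:M.

Ltac ent2 := apply/matrixP; do 2 (let x := fresh "x" in move=> x; case: (ord2 x) => ->);
  rewrite ?(mxE, sum2, sum3, w0, w1) /=.
Lemma ord1' (i : 'I_1) : i = 0. Proof. exact: ord1. Qed.
Ltac ent1 := apply/matrixP; do 2 (let x := fresh "x" in move=> x; rewrite (ord1' x));
  rewrite ?(mxE, sum2, sum3, w0, w1, big_ord1) /=.

Lemma pi1_star : is_starhom CS pi1.
Proof.
split.
- by ent2.
- by split => *; ent2.
- move=> a b /cg_bd[a1 a2 a3 a4] /cg_bd[b1 b2 b3 b4]; ent2; rewrite ?a1 ?a2 ?a3 ?a4 ?b1 ?b2 ?b3 ?b4; ring.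
- by move=> a _; ent2.
Qed.

Lemma pi2_star : is_starhom CS pi2.
Proof.
split.
- by ent1.
- by split => *; ent1.
- move=> a b /cg_bd[a1 a2 a3 a4] /cg_bd[b1 b2 b3 b4]; ent1; rewrite ?a1 ?a2 ?a3 ?a4 ?b1 ?b2 ?b3 ?b4; ring.
- by move=> a _; ent1.
Qed.

Definition mk (B : 'M[C]_2) (c : C) : 'M[C]_3 :=
  B j0 j0 *: E i0 i0 + B j0 j1 *: E i0 i1 + B j1 j0 *: E i1 i0 + B j1 j1 *: E i1 i1 + c *: E i2 i2.
Lemma mk_cs B c : CS (mk B c).
Proof.
rewrite /mk. apply: cg_add; last by apply: cg_scale; exact: cgE22.
apply: cg_add; last by apply: cg_scale; exact: cgE11.
apply: cg_add; last by apply: cg_scale; exact: cgE10.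
apply: cg_add; apply: cg_scale; [exact: cgE00|exact: cgE01].
Qed.
Lemma pi1_mk B c : pi1 (mk B c) = B.
Proof. by ent2; ring. Qed.
Lemma pi2_mk B c : pi2 (mk B c) = c%:M.
Proof. by ent1; ring. Qed.

Lemma formE3 (u v : 'cV[C]_3) a b : (adj u *m E a b *m v) 0 0 = (u a 0)^* * v b 0.
Proof.
rewrite !mxE sum3 !mxE !sum3 !mxE.
by case: (ord3 a) => ->; case: (ord3 b) => -> /=; ring.
Qed.

Lemma form2 (u v : 'cV[C]_2) (M : 'M[C]_2) : (adj u *m M *m v) 0 0 =
  (u j0 0)^* * (M j0 j0 * v j0 0 + M j0 j1 * v j1 0) + (u j1 0)^* * (M j1 j0 * v j0 0 + M j1 j1 * v j1 0).
Proof. rewrite !mxE sum2 !mxE !sum2 !mxE; ring. Qed.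

Lemma form1 (u v : 'cV[C]_1) (M : 'M[C]_1) : (adj u *m M *m v) 0 0 = (u 0 0)^* * M 0 0 * v 0 0.
Proof. by rewrite !mxE big_ord1 !mxE big_ord1 !mxE. Qed.

Lemma bp_E aa : blockpos (fun _ _ : 'I_1 => E aa aa).
Proof. move=> x; rewrite big_ord1 big_ord1 formE3 mulrC; exact: mul_conjC_ge0. Qed.

Lemma bp_choi : blockpos (fun i j : 'I_2 => E (w i) (w j)).
Proof.
move=> x; rewrite !sum2 !formE3 w0 w1.
have -> : forall a b : C, a^* * a + a^* * b + (b^* * a + b^* * b) = (a + b) * (a + b)^*.
  by move=> a b; rewrite rmorphD /=; ring.
exact: mul_conjC_ge0.
Qed.

Lemma lin_dec k (f : 'M[C]_3 -> 'M[C]_k) a : linear_on CS f -> CS a ->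
  f a = a i0 i0 *: f (E i0 i0) + a i0 i1 *: f (E i0 i1) + a i1 i0 *: f (E i1 i0)
   + a i1 i1 *: f (E i1 i1) + a i2 i2 *: f (E i2 i2).
Proof.
move=> [fD fZ] ca; rewrite {1}(bd_dec _ (cg_bd _ ca)).
have c00 := cg_scale (a i0 i0) cgE00; have c01 := cg_scale (a i0 i1) cgE01.
have c10 := cg_scale (a i1 i0) cgE10; have c11 := cg_scale (a i1 i1) cgE11.
have c22 := cg_scale (a i2 i2) cgE22.
rewrite fD; [|by repeat apply: cg_add|by []].
rewrite fD; [|by repeat apply: cg_add|by []].
rewrite fD; [|by repeat apply: cg_add|by []].
rewrite fD //.
by rewrite !fZ //; first [exact: cgE00|exact: cgE01|exact: cgE10|exact: cgE11|exact: cgE22].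
Qed.

Definition vec2 (a b : C) : 'cV[C]_2 := \col_(i < 2) (if (i : nat) == 0%N then a else b).
Lemma S_T : S T. Proof. exists 0, 1, 0; by rewrite !scale0r scale1r add0r addr0. Qed.
Lemma S_Ta : S (adj T). Proof. exists 0, 0, 1; by rewrite !scale0r scale1r !add0r. Qed.


Lemma exu : exists u : C, u * u^* = 1 /\ 0 <= l * u.
Proof.
have [l0|l0] := eqVneq l 0.
  by exists 1; rewrite conjC1 mulr1 l0 mul0r.
have nl : `|l| != 0 by rewrite normr_eq0.
have h : l * l^* = `|l| * `|l| by rewrite -normCK expr2.
have nc : `|l|^* = `|l| by rewrite geC0_conj // normr_ge0.
exists (l^* / `|l|); split.
  rewrite rmorphM /= conjCK rmorphV /=; last by rewrite unitfE.
  by rewrite nc mulrACA -invfM [l^* * l]mulrC h mulfV // mulf_neq0.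
by rewrite mulrA h mulfK // normr_ge0.
Qed.

Lemma lin3 (c s t : C) : c - s - t = 0 -> c + 'i * s - 'i * t = 0 ->
  c - 'i * s + 'i * t = 0 -> [/\ c = 0, s = 0 & t = 0].
Proof.
move=> e1 e2 e3.
have c0 : c = 0.
  have : c *+ 2 = 0 by rewrite -[RHS](addr0 0) -{1}e2 -e3; ring.
  by move/eqP; rewrite mulrn_eq0 /= => /eqP.
move: e1 e2; rewrite c0 sub0r add0r => e1 e2.
have st : s = t.
  have : 'i * (s - t) = 0 by rewrite -e2; ring.
  by move/eqP; rewrite mulf_eq0 (negbTE (neq0Ci C)) /= subr_eq0 => /eqP.
move: e1; rewrite st -opprD => /eqP; rewrite oppr_eq0 -mulr2n mulrn_eq0 /= => /eqP t0.
by rewrite t0.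
Qed.

Ltac ringpos t := match goal with |- is_true (0 <= ?e)%R -> _ => have -> : e = t by ring end; done.
Section Pi1bd.
Variable phi : 'M[C]_3 -> 'M[C]_2.
Hypothesis hu : is_ucp CS phi.
Hypothesis hag : forall a, S a -> phi a = pi1 a.

Let A := phi (E i0 i0).
Let X := phi (E i0 i1).
Let Y := phi (E i1 i0).
Let B := phi (E i1 i1).
Let D := phi (E i2 i2).

Lemma rel1 : A + B + D = 1%:M.
Proof.
case: hu => h1 hl _; have := lin_dec _ _ _ hl (@cg_1 _ _ S); rewrite h1 => ->.
by rewrite !mxE /= !scale1r !scale0r !addr0.
Qed.

Lemma relT : X + l *: D = pi1 T.
Proof.
case: hu => h1 hl _; rewrite -(hag _ S_T) (lin_dec _ _ _ hl cgT).
by rewrite !mxE /= !scale1r !scale0r !add0r !addr0.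
Qed.
Lemma relTa : Y + l^* *: D = pi1 (adj T).
Proof.
case: hu => h1 hl _; rewrite -(hag _ S_Ta) (lin_dec _ _ _ hl cgTa).
by rewrite !mxE /= ?conjC0 ?conjC1 !scale1r !scale0r !add0r !addr0.
Qed.

Lemma posD (y : 'cV[C]_2) : 0 <= (adj y *m D *m y) 0 0.
Proof.
case: hu => _ _ /(_ 1%N (fun _ _ => E i2 i2) (fun _ _ => cgE22) (bp_E i2) (fun _ => y)).
by rewrite !big_ord1.
Qed.
Lemma posA (y : 'cV[C]_2) : 0 <= (adj y *m A *m y) 0 0.
Proof.
case: hu => _ _ /(_ 1%N (fun _ _ => E i0 i0) (fun _ _ => cgE00) (bp_E i0) (fun _ => y)).
by rewrite !big_ord1.
Qed.
Lemma posB (y : 'cV[C]_2) : 0 <= (adj y *m B *m y) 0 0.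
Proof.
case: hu => _ _ /(_ 1%N (fun _ _ => E i1 i1) (fun _ _ => cgE11) (bp_E i1) (fun _ => y)).
by rewrite !big_ord1.
Qed.
Lemma cgW i j : CS (E (w i) (w j)).
Proof.
by case: (ord2 i) => ->; case: (ord2 j) => ->; rewrite ?w0 ?w1;
  [exact: cgE00|exact: cgE01|exact: cgE10|exact: cgE11].
Qed.
Lemma choi (p r : 'cV[C]_2) :
  0 <= (adj p *m A *m p) 0 0 + (adj p *m X *m r) 0 0 + ((adj r *m Y *m p) 0 0 + (adj r *m B *m r) 0 0).
Proof.
case: hu => _ _ /(_ 2%N (fun i j => E (w i) (w j)) cgW bp_choi
   (fun i => if (i : nat) == 0%N then p else r)).
by rewrite !sum2 /= !w0 !w1.
Qed.


Lemma Dom (om : C) : om * om^* = 1 -> 0 < 1 + l * om + (l * om)^* ->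
  D j0 j0 - om^-1 * D j0 j1 - om * D j1 j0 + D j1 j1 = 0.
Proof.
move=> hom hK.
have om0 : om != 0 by apply/eqP => om0; move: hom; rewrite om0 mul0r => /eqP; rewrite eq_sym oner_eq0.
have e : om^* = om^-1 by rewrite -[om^*]mul1r -(mulVf om0) -mulrA hom mulr1.
have hX : X = pi1 T - l *: D by rewrite -relT addrK.
have hY : Y = pi1 (adj T) - l^* *: D by rewrite -relTa addrK.
have hB : B = 1%:M - A - D by apply/matrixP => i j; rewrite -rel1; rewrite !mxE; ring.
have h := choi (vec2 1 (-om^* )) (vec2 om (-1)).
have hq := posD (vec2 1 (-om^* )).
rewrite hX hY hB !form2 ?mxE /= ?w0 ?w1 ?mxE /= in h hq.
rewrite !rmorphN /= ?conjC0 ?conjC1 ?conjCK in h. rewrite !rmorphN /= ?conjC0 ?conjC1 ?conjCK in hq. rewrite rmorphM /= in hK. rewrite !e in h hq hK.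
set q := (X in X = 0).
have h1 : 0 <= - (1 + l * om + l^* / om) * q.
  move: h; match goal with |- is_true (0 <= ?e)%R -> _ =>
    have -> : e = - (1 + l * om + l^* / om) * q by rewrite /q; field end; done.
have h2 : 0 <= q.
  move: hq; match goal with |- is_true (0 <= ?e)%R -> _ =>
    have -> : e = q by rewrite /q; field end; done.
apply/le_anti; rewrite h2 andbT -oppr_ge0.
by rewrite mulNr -mulrN pmulr_rge0 in h1.
Qed.

Lemma Dz : D = 0.
Proof.
have [u [hu1 hu2]] := exu.
have u0 : u != 0 by apply/eqP => u0; move: hu1; rewrite u0 mul0r => /eqP; rewrite eq_sym oner_eq0.
have cx : (l * u)^* = l * u by rewrite geC0_conj.
have cx' : l^* * u^* = l * u by rewrite -rmorphM.
have ii : 'i * 'i = -1 :> C by rewrite -expr2 sqrCi.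
have K1 : 0 < 1 + l * u + (l * u)^*.
  by rewrite cx -addrA ltr_wpDr ?addr_ge0 // ltr01.
have H2 : ('i * u) * ('i * u)^* = 1.
  rewrite rmorphM /= conjCi.
  have -> : 'i * u * (- 'i * u^*) = - ('i * 'i) * (u * u^*) by ring.
  by rewrite ii hu1 opprK mulr1.
have K2 : 0 < 1 + l * ('i * u) + (l * ('i * u))^*.
  rewrite !rmorphM /= conjCi.
  have -> : 1 + l * ('i * u) + l^* * (- 'i * u^*) = 1 + 'i * (l * u) - 'i * (l^* * u^* ) by ring.
  by rewrite cx' addrK ltr01.
have H3 : (- 'i * u) * (- 'i * u)^* = 1.
  rewrite rmorphM /= rmorphN /= conjCi opprK.
  have -> : - 'i * u * ('i * u^*) = - ('i * 'i) * (u * u^*) by ring.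
  by rewrite ii hu1 opprK mulr1.
have K3 : 0 < 1 + l * (- 'i * u) + (l * (- 'i * u))^*.
  rewrite !rmorphM /= rmorphN /= conjCi opprK.
  have -> : 1 + l * (- 'i * u) + l^* * ('i * u^*) = 1 - 'i * (l * u) + 'i * (l^* * u^* ) by ring.
  by rewrite cx' subrK ltr01.
have E1 := Dom _ hu1 K1.
have E2 := Dom _ H2 K2.
have E3 := Dom _ H3 K3.
rewrite invfM invCi in E2; rewrite invfM invrN invCi opprK in E3.
have F1 : (D j0 j0 + D j1 j1) - (u^-1 * D j0 j1) - (u * D j1 j0) = 0 by rewrite -E1; ring.
have F2 : (D j0 j0 + D j1 j1) + 'i * (u^-1 * D j0 j1) - 'i * (u * D j1 j0) = 0 by rewrite -E2; ring.
have F3 : (D j0 j0 + D j1 j1) - 'i * (u^-1 * D j0 j1) + 'i * (u * D j1 j0) = 0 by rewrite -E3; ring.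
have [c0 s0 t0] := lin3 _ _ _ F1 F2 F3.
have d00 : 0 <= D j0 j0 by move: (posD (vec2 1 0)); rewrite form2 !mxE /= conjC1 conjC0; ringpos (D j0 j0).
have d11 : 0 <= D j1 j1 by move: (posD (vec2 0 1)); rewrite form2 !mxE /= conjC1 conjC0; ringpos (D j1 j1).
move/eqP: c0; rewrite paddr_eq0 // => /andP[/eqP e00 /eqP e11].
move/eqP: s0; rewrite mulf_eq0 invr_eq0 (negbTE u0) /= => /eqP e01.
move/eqP: t0; rewrite mulf_eq0 (negbTE u0) /= => /eqP e10.
by ent2; rewrite ?e00 ?e01 ?e10 ?e11.
Qed.

Lemma zero_of (x : C) : 0 <= x -> 0 <= - x -> x = 0.
Proof. by move=> h1 h2; apply/le_anti; rewrite h1 andbT -oppr_ge0. Qed.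

Lemma Aval : A = pi1 (E i0 i0).
Proof.
have hD := Dz.
have hX : X = pi1 T by rewrite -relT hD scaler0 addr0.
have hY : Y = pi1 (adj T) by rewrite -relTa hD scaler0 addr0.
have hB : B = 1%:M - A by apply/matrixP => i j; rewrite -rel1 hD !mxE; ring.
have h1 : 0 <= A j0 j0 - 1 - A j1 j1.
  move: (choi (vec2 (-1) 0) (vec2 0 1)); rewrite hX hY hB !form2 ?mxE /= ?w0 ?w1 ?mxE /=.
  rewrite !rmorphN /= ?conjC0 ?conjC1; ringpos (A j0 j0 - 1 - A j1 j1).
have h2 : 0 <= 1 - A j0 j0.
  move: (posB (vec2 1 0)); rewrite hB form2 ?mxE /= ?conjC0 ?conjC1; ringpos (1 - A j0 j0).
have h3 : 0 <= A j1 j1.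
  move: (posA (vec2 0 1)); rewrite form2 ?mxE /= ?conjC0 ?conjC1; ringpos (A j1 j1).
have : (A j0 j0 - 1 - A j1 j1) + (1 - A j0 j0) + A j1 j1 == 0 by apply/eqP; ring.
have hxy := addr_ge0 h1 h2.
rewrite paddr_eq0 // => /andP[hs /eqP e3]; move: hs; rewrite paddr_eq0 // => /andP[/eqP e1 /eqP e2].
have a00 : A j0 j0 = 1 by apply/eqP; rewrite -subr_eq0 -oppr_eq0 opprB e2.
have g : forall b, 0 <= b * A j0 j1 + b^* * A j1 j0.
  move=> b; move: (choi (vec2 1 b) (vec2 0 (-1))); rewrite hX hY hB !form2 ?mxE /= ?w0 ?w1 ?mxE /=.
  rewrite !rmorphN /= ?conjC0 ?conjC1 a00 e3.
  ringpos (b * A j0 j1 + b^* * A j1 j0).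
have s0 : A j0 j1 + A j1 j0 = 0.
  apply: zero_of; first by move: (g 1); rewrite conjC1 !mul1r.
  by move: (g (-1)); rewrite rmorphN /= conjC1 !mulN1r opprD.
have d0 : 'i * (A j0 j1 - A j1 j0) = 0.
  apply: zero_of; first by move: (g 'i); rewrite conjCi; ringpos ('i * (A j0 j1 - A j1 j0)).
  by move: (g (- 'i)); rewrite rmorphN /= conjCi opprK; ringpos (- ('i * (A j0 j1 - A j1 j0))).
move/eqP: d0; rewrite mulf_eq0 (negbTE (neq0Ci C)) /= subr_eq0 => /eqP d0.
have a01 : A j0 j1 = 0.
  by apply/eqP; move: s0; rewrite -d0 -mulr2n => /eqP; rewrite mulrn_eq0.
have a10 : A j1 j0 = 0 by rewrite -d0.
by ent2; rewrite ?a00 ?a01 ?a10 ?e3.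
Qed.

Lemma phi_eq a : CS a -> phi a = pi1 a.
Proof.
move=> ca.
have hD := Dz.
have hA := Aval.
have hX : X = pi1 T by rewrite -relT hD scaler0 addr0.
have hY : Y = pi1 (adj T) by rewrite -relTa hD scaler0 addr0.
have hB : B = 1%:M - A by apply/matrixP => i j; rewrite -rel1 hD !mxE; ring.
case: hu => _ hl _.
case: pi1_star => _ hl1 _ _.
rewrite (lin_dec _ _ _ hl ca) (lin_dec _ _ _ hl1 ca).
rewrite -/A -/X -/Y -/B -/D hB hX hY hD hA.
by ent2; ring.
Qed.
End Pi1bd.

Lemma pi1_bd : boundary_rep S pi1.
Proof.
split; first exact: pi1_star.
  split => // V HV; apply: irr_gen => i j.
  by have := HV (mk (delta_mx i j)^T 0) (mk_cs _ _); rewrite pi1_mk trmxK.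
by move=> phi hu hag a ca; exact: (phi_eq _ hu hag _ ca).
Qed.

Lemma pi2_irr : irreducible_rep CS pi2.
Proof.
split => // V HV; apply: irr_gen => i j.
have := HV (mk 0 1) (mk_cs _ _); rewrite pi2_mk.
have -> : delta_mx i j = (1%:M : 'M[C]_1)^T by rewrite (ord1' i) (ord1' j); ent1.
done.
Qed.

Section Pi2bd.
Variable phi : 'M[C]_3 -> 'M[C]_1.
Hypothesis hu : is_ucp CS phi.
Hypothesis hag : forall a, S a -> phi a = pi2 a.
Hypothesis hl : 2^-1 < `|l|.

Let al := phi (E i0 i0) 0 0.
Let ga := phi (E i0 i1) 0 0.
Let ga' := phi (E i1 i0) 0 0.
Let be := phi (E i1 i1) 0 0.
Let de := phi (E i2 i2) 0 0.

Lemma pos1 aa (y : C) : 0 <= y^* * phi (E aa aa) 0 0 * y.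
Proof.
case: hu => _ _ /(_ 1%N (fun _ _ => E aa aa) (fun _ => _) (bp_E aa) (fun _ => const_mx y)).
rewrite !big_ord1 form1 !mxE; apply.
by move=> _ _; case: (ord3 aa) => ->; [exact: cgE00|exact: cgE11|exact: cgE22].
Qed.
Lemma choi1 (p r : C) :
  0 <= p^* * al * p + p^* * ga * r + (r^* * ga' * p + r^* * be * r).
Proof.
case: hu => _ _ /(_ 2%N (fun i j => E (w i) (w j)) cgW bp_choi
   (fun i => if (i : nat) == 0%N then const_mx p else const_mx r)).
by rewrite !sum2 /= !w0 !w1 !form1 !mxE.
Qed.
Lemma rels : [/\ al + be + de = 1, ga + l * de = l & ga' + l^* * de = l^*].
Proof.
case: hu => h1 hlin _.
have := lin_dec _ _ _ hlin (@cg_1 _ _ S); rewrite h1 => /matrixP /(_ 0 0).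
have := lin_dec _ _ _ hlin cgT; rewrite (hag _ S_T) => /matrixP /(_ 0 0).
have := lin_dec _ _ _ hlin cgTa; rewrite (hag _ S_Ta) => /matrixP /(_ 0 0).
rewrite !mxE /= ?conjC0 ?conjC1 => e3 e2 e1.
split.
- by apply: (etrans _ (esym e1)); rewrite /al /be /de; ring.
- by rewrite mulr1n in e2; apply: (etrans _ (esym e2)); rewrite /ga /de; ring.
- by rewrite mulr1n in e3; apply: (etrans _ (esym e3)); rewrite /ga' /de; ring.
Qed.
Lemma hk : 1 - 4%:R * (l * l^*) < 0.
Proof.
have n0 : 0 <= `|l| by rewrite normr_ge0.
have p1 : 0 < `|l| *+ 2 - 1.
  have two0 : (2%:R : C) != 0 by rewrite pnatr_eq0.
  have -> : `|l| *+ 2 - 1 = 2%:R * (`|l| - 2^-1) by rewrite mulrBr mulfV // mulr_natl.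
  by rewrite pmulr_rgt0 ?ltr0n // subr_gt0.
have p2 : 0 < `|l| *+ 2 + 1 by rewrite ltr_wpDl ?ltr01 // mulrn_wge0.
have : 0 < (`|l| *+ 2 - 1) * (`|l| *+ 2 + 1) by rewrite pmulr_rgt0.
have -> : (`|l| *+ 2 - 1) * (`|l| *+ 2 + 1) = - (1 - 4%:R * `|l| ^+ 2) by rewrite -[`|l| *+ 2]mulr_natr; ring.
by rewrite oppr_gt0 normCK.
Qed.

Lemma phi2_eq a : CS a -> phi a = pi2 a.
Proof.
move=> ca.
have [r1 r2 r3] := rels.
have ha : 0 <= al by move: (pos1 i0 1); rewrite conjC1 mul1r mulr1.
have hb : 0 <= be by move: (pos1 i1 1); rewrite conjC1 mul1r mulr1.
have ede : de = 1 - al - be by rewrite -r1; ring.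
have ega : ga = l * (al + be) by rewrite -(subr0 ga) -[0](subrr l) -{1}r2 ede; ring.
have ega' : ga' = l^* * (al + be) by rewrite -(subr0 ga') -[0](subrr l^*) -{1}r3 ede; ring.
have hA : 0 <= (1 - 4%:R * (l * l^*)) * al.
  move: (choi1 1 (- (l^* + l^*))); rewrite ega ega' conjC1 rmorphN rmorphD /= conjCK.
  ringpos ((1 - 4%:R * (l * l^*)) * al).
have hB : 0 <= (1 - 4%:R * (l * l^*)) * be.
  move: (choi1 (- (l + l)) 1); rewrite ega ega' conjC1 rmorphN rmorphD /=.
  ringpos ((1 - 4%:R * (l * l^*)) * be).
rewrite nmulr_rge0 ?hk // in hA. rewrite nmulr_rge0 ?hk // in hB.
have a0 : al = 0 by apply/le_anti; rewrite hA ha.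
have b0 : be = 0 by apply/le_anti; rewrite hB hb.
have d1 : de = 1 by rewrite ede a0 b0; ring.
have g0 : ga = 0 by rewrite ega a0 b0; ring.
have g0' : ga' = 0 by rewrite ega' a0 b0; ring.
case: hu => _ hlin _.
case: pi2_star => _ hl2 _ _.
rewrite (lin_dec _ _ _ hlin ca) (lin_dec _ _ _ hl2 ca).
ent1; rewrite -/al -/ga -/ga' -/be -/de a0 b0 d1 g0 g0'; ring.
Qed.
End Pi2bd.

Lemma adjZ n m (c : C) (M : 'M[C]_(n, m)) : adj (c *: M) = c^* *: adj M.
Proof. by apply/matrixP => i j; rewrite !mxE rmorphM. Qed.

Lemma vs_cp k (xi : 'cV[C]_3) n (AA : 'I_n -> 'I_n -> 'M[C]_3) :
  blockpos AA -> blockpos (fun i j => ((adj xi *m AA i j *m xi) 0 0) *: (1%:M : 'M[C]_k)).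
Proof.
move=> hA x.
have -> : \sum_(i < n) \sum_(j < n) (adj (x i) *m (((adj xi *m AA i j *m xi) 0 0) *: (1%:M : 'M[C]_k)) *m x j) 0 0
  = \sum_(m < k) \sum_(i < n) \sum_(j < n)
      (adj ((x i m 0) *: xi) *m AA i j *m ((x j m 0) *: xi)) 0 0.
  symmetry; rewrite exchange_big; apply: eq_bigr => i _.
  rewrite exchange_big; apply: eq_bigr => j _; symmetry.
  rewrite scalemx1 mul_mx_scalar -scalemxAl mxE [(adj (x i) *m x j) 0 0]mxE mulr_sumr; apply: eq_bigr => m _.
  rewrite adjZ -!scalemxAl -scalemxAr !mxE; ring.
by apply: sumr_ge0 => m _; apply: hA.
Qed.

Lemma E22c b : bd b -> E i2 i2 *m b = b *m E i2 i2.
Proof. case=> a1 a2 a3 a4; ent3; rewrite ?a1 ?a2 ?a3 ?a4; ring. Qed.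
Lemma aE22 b : bd b -> b *m E i2 i2 = b i2 i2 *: E i2 i2.
Proof. case=> a1 a2 a3 a4; ent3; rewrite ?a1 ?a2 ?a3 ?a4; ring. Qed.

Section Rho.
Variable k : nat.
Variable rho : 'M[C]_3 -> 'M[C]_k.
Hypothesis hbr : boundary_rep S rho.
Hypothesis hl : `|l| <= 2^-1.

Lemma P01 : rho (E i2 i2) = 0 \/ rho (E i2 i2) = 1%:M.
Proof.
case: hbr => [[h1 [hD hZ] hM hA] [hk hirr] _].
set P := rho (E i2 i2).
have PP : P *m P = P by rewrite /P -hM ?mul_delta_mx //; exact: cgE22.
have inv : forall b, CS b -> (P^T *m (rho b)^T <= P^T)%MS.
  move=> b cb; rewrite -trmx_mul /P -hM //; last exact: cgE22.
  rewrite -(E22c _ (cg_bd _ cb)) hM //; last exact: cgE22.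
  by rewrite trmx_mul submxMl.
case: (hirr _ inv) => [h|h].
  by left; move: h; rewrite submx0 => /eqP h; apply: trmx_inj; rewrite h trmx0.
right; move: h; rewrite sub1mx row_full_unit unitmx_tr => hu.
by rewrite -(mulKmx hu P) PP mulVmx.
Qed.

Lemma rho22 : rho (E i2 i2) = 0.
Proof.
case: P01 => // P1.
case: hbr => [[h1 [hD hZ] hM hA] [hk hirr] hb].
exfalso.
have hll : 0 <= 1 - 4%:R * (l * l^*).
  have n0 : 0 <= `|l| by rewrite normr_ge0.
  have p1 : 0 <= 1 - `|l| *+ 2.
    have two0 : (2%:R : C) != 0 by rewrite pnatr_eq0.
    have -> : 1 - `|l| *+ 2 = 2%:R * (2^-1 - `|l|) by rewrite mulrBr mulfV // mulr_natl.
    by rewrite pmulr_rge0 ?ltr0n // subr_ge0.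
  have p2 : 0 <= 1 + `|l| *+ 2 by rewrite addr_ge0 ?ler01 // mulrn_wge0.
  have : 0 <= (1 - `|l| *+ 2) * (1 + `|l| *+ 2) by rewrite mulr_ge0.
  have -> : (1 - `|l| *+ 2) * (1 + `|l| *+ 2) = 1 - 4%:R * `|l| ^+ 2 by rewrite -[`|l| *+ 2]mulr_natr; ring.
  by rewrite normCK.
set s := sqrtC (1 - 4%:R * (l * l^*)).
have hs0 : 0 <= s by rewrite sqrtC_ge0.
have hs2 : s * s = 1 - 4%:R * (l * l^*) by rewrite -expr2 sqrtCK.
have h1s : 0 < 1 + s by rewrite ltr_wpDr ?ltr01.
have two0 : (2%:R : C) != 0 by rewrite pnatr_eq0.
set x := sqrtC ((1 + s) / 2%:R).
have hx0 : 0 <= x by rewrite sqrtC_ge0 divr_ge0 ?ltW // ler0n.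
have hx2 : x * x = (1 + s) / 2%:R by rewrite -expr2 sqrtCK.
have x0 : x != 0.
  apply/eqP => x0; move: hx2; rewrite x0 mul0r => /eqP; rewrite eq_sym mulf_eq0 invr_eq0 (negbTE two0) orbF.
  by rewrite (gt_eqF h1s).
have xc : x^* = x by rewrite geC0_conj.
set y := l / x.
have yc : y^* = l^* / x by rewrite /y fmorph_div /= xc.
set xi : 'cV[C]_3 := \col_i (if (i : nat) == 0%N then x else if (i : nat) == 1%N then y else 0).
pose f a := (adj xi *m a *m xi) 0 0.
have fD : forall a b, f (a + b) = f a + f b by move=> a b; rewrite /f mulmxDr mulmxDl mxE.
have fZ : forall (c : C) a, f (c *: a) = c * f a by move=> c a; rewrite /f -scalemxAr -scalemxAl mxE.
have fT : f T = l.
  rewrite /f; rewrite ?(mxE, sum3) /= ?conjC0 xc ?yc /y; field; exact: x0.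
have fTa : f (adj T) = l^*.
  rewrite /f; rewrite ?(mxE, sum3) /= ?conjC0 ?conjC1 ?rmorph0 yc; field; exact: x0.
have f1 : f 1%:M = 1.
  rewrite /f; rewrite ?(mxE, sum3) /= ?conjC0 xc yc /y.
  have hl4 : l^* * l = (1 - s * s) / 4%:R.
    by rewrite hs2; field.
  rewrite ?conjC0; transitivity (x * x + (l^* * l) / (x * x)); first by field.
  by rewrite hx2 hl4; field; rewrite (gt_eqF h1s).
have f22 : f (E i2 i2) = 0.
  by rewrite /f formE3 !mxE /= conjC0 mul0r.
pose phi a := f a *: (1%:M : 'M[C]_k).
have hucp : is_ucp CS phi.
  split; first by rewrite /phi f1 scale1r.
    by split => *; rewrite /phi ?fD ?fZ ?scalerDl ?scalerA.
  by move=> n AA _ hA'; exact: vs_cp.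
have rhoa : forall a, CS a -> rho a = a i2 i2 *: 1%:M.
  move=> a ca; rewrite -[rho a]mulmx1 -P1 -hM //; last exact: cgE22.
  by rewrite (aE22 _ (cg_bd _ ca)) hZ ?P1 //; exact: cgE22.
have hag : forall a, S a -> phi a = rho a.
  move=> a Sa; rewrite rhoa; last exact: cg_S.
  case: Sa => c0 [c1 [c2 ->]].
  rewrite /phi !fD !fZ f1 fT fTa; congr (_ *: _); rewrite !mxE /=; ring.
have := hb phi hucp hag (E i2 i2) cgE22.
rewrite /phi f22 scale0r P1 => /matrixP /(_ (Ordinal hk) (Ordinal hk)).
by rewrite !mxE eqxx /= => /eqP; rewrite eq_sym oner_eq0.
Qed.
End Rho.
End S.

Lemma kill_all (C : numClosedFieldType) (l : C) k (rho : 'M[C]_3 -> 'M[C]_k) a :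
  is_starhom (cstar_gen (opsys (Tlam l))) rho -> cstar_gen (opsys (Tlam l)) a ->
  a (i0) (i0) = 0 -> a i0 i1 = 0 -> a i1 i0 = 0 -> a i1 i1 = 0 ->
  a i2 i2 = 0 \/ rho (delta_mx i2 i2) = 0 -> rho a = 0.
Proof.
case=> _ hlin _ _ ca e1 e2 e3 e4 e5.
rewrite (lin_dec _ _ _ _ _ hlin ca) e1 e2 e3 e4 !scale0r !add0r.
by case: e5 => ->; rewrite ?scale0r ?scaler0.
Qed.

Lemma pi2_bd (C : numClosedFieldType) (l : C) : 2^-1 < `|l| -> boundary_rep (opsys (Tlam l)) (pi2 C).
Proof.
move=> hl; split; [exact: pi2_star|exact: pi2_irr|].
by move=> phi hu hag a ca; exact: (phi2_eq _ _ phi hu hag hl a ca).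
Qed.

Theorem mainTheorem5 (C : numClosedFieldType) (l : C) :
  (`|l| <= 2^-1 -> env_iso_M (opsys (Tlam l)) 2) /\
  (2^-1 < `|l| -> env_iso_MM (opsys (Tlam l)) 2 1).
Proof.
split => hl.
- exists (pi1 C); split.
  + exact: pi1_star.
  + by move=> B; exists (mk C B 0); [exact: mk_cs|exact: pi1_mk].
  + move=> a ca; split.
      move=> /matrixP pa; split => // k rho hbr.
      have := pa j0 j0; have := pa j0 j1; have := pa j1 j0; have := pa j1 j1.
      rewrite !mxE !w0 !w1 => e4 e3 e2 e1.
      have hs : is_starhom (cstar_gen (opsys (Tlam l))) rho by case: hbr.
      apply: (kill_all _ _ _ _ _ hs ca e1 e2 e3 e4).
      by right; exact: (rho22 _ _ _ _ hbr hl).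
    by case=> _ /(_ 2%N (pi1 C) (pi1_bd _ l)).
- exists (pi1 C), (pi2 C); split.
  + exact: pi1_star.
  + exact: pi2_star.
  + move=> B1 B2; exists (mk C B1 (B2 0 0)); first exact: mk_cs.
    split; first exact: pi1_mk.
    by rewrite pi2_mk; apply/matrixP => i j; rewrite !ord1 !mxE.
  + move=> a ca; split.
      case=> /matrixP pa /matrixP pb; split => // k rho hbr.
      have := pa j0 j0; have := pa j0 j1; have := pa j1 j0; have := pa j1 j1.
      rewrite !mxE !w0 !w1 => e4 e3 e2 e1.
      have hs : is_starhom (cstar_gen (opsys (Tlam l))) rho by case: hbr.
      apply: (kill_all _ _ _ _ _ hs ca e1 e2 e3 e4).
      by left; move: (pb 0 0); rewrite !mxE.
    case=> _ h; split; [exact: (h 2%N (pi1 C) (pi1_bd _ l))|exact: (h 1%N (pi2 C) (pi2_bd _ _ hl))].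
Qed.
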